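(* In a symmetric instance with $k$ signals ($2\le k\le n$), a symmetric scheme $\varphi$ is persuasive if and only if $u_{\mathcal R}(\varphi)\ge\rho_E$, where $u_{\mathcal R}(\varphi)$ is the receiver's expected utility when she follows the recommendations of $\varphi$.
   Context: Model: a receiver chooses one of the actions $[n]$; each action $i$ has a type $\theta_i$; the state $\boldsymbol\theta=(\theta_1,\dots,\theta_n)$ is drawn from a commonly known distribution $q$ over a finite set of type vectors; each type $t$ has receiver value $\rho(t)$ and sender value $\xi(t)$. A direct scheme with $k$ signals maps each state to a distribution over $k$ signals, each signal recommending an action; it is persuasive if for every signal $\sigma$ sent with positive probability and recommending $i$, $\mathbb E[\rho(\theta_i)\mid\sigma]\ge\mathbb E[\rho(\theta_j)\mid\sigma]$ for all $j\in[n]$. $\rho_E=\max_i\sum_{\boldsymbol\theta}q_{\boldsymbol\theta}\rho(\theta_i)$. Symmetric instance: $q_{\boldsymbol\theta}=q_{\boldsymbol\theta'}$ whenever $\boldsymbol\theta'$ is a permutation of $\boldsymbol\theta$. For a permutation $\pi$ of $[n]$ let $(\pi\cdot\boldsymbol\theta)_{\pi(l)}=\theta_l$. A symmetric scheme is a direct scheme with $k$ signals whose signals recommend the distinct actions $1,\dots,k$ and which satisfies $\varphi(\pi\cdot\boldsymbol\theta,\pi(i))=\varphi(\boldsymbol\theta,i)$ for every state $\boldsymbol\theta$, every $i\in[k]$ and every permutation $\pi$ of $[n]$ with $\pi([k])=[k]$ (here $\varphi(\boldsymbol\theta,i)$ is the probability of recommending $i$ in state $\boldsymbol\theta$). *)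

(* Defs.v *)
From HB Require Import structures.
From mathcomp Require Import all_boot all_order all_algebra all_fingroup.
Set Implicit Arguments. Unset Strict Implicit. Unset Printing Implicit Defensive.
Import Order.TTheory GRing.Theory Num.Theory.
Local Open Scope ring_scope.

Section Persuasion.
Variables (R : realFieldType) (T : finType) (n : nat).

(* a state = type vector (theta_1, ..., theta_n); actions are 'I_n *)
Definition state := {ffun 'I_n -> T}.

Definition permute (pi : {perm 'I_n}) (th : state) : state :=
  [ffun m => th ((pi^-1)%g m)].

Definition is_distr (q : state -> R) :=
  (forall th, 0 <= q th) /\ \sum_(th : state) q th = 1.

Definition symmetric_instance (q : state -> R) :=
  forall (pi : {perm 'I_n}) (th : state), q (permute pi th) = q th.

(* A symmetric scheme with k signals: signal i recommends action i, i < k.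
   phi th a = probability of recommending action a in state th
   (zero for a >= k). *)
Definition symmetric_scheme (k : nat) (phi : state -> 'I_n -> R) :=
  [/\ (forall th a, 0 <= phi th a),
      (forall th, \sum_(a < n) phi th a = 1),
      (forall th (a : 'I_n), (k <= a)%N -> phi th a = 0) &
      (forall th (i : 'I_n) (pi : {perm 'I_n}), (i < k)%N ->
         pi @: [set a : 'I_n | (a < k)%N] = [set a : 'I_n | (a < k)%N] ->
         phi (permute pi th) (pi i) = phi th i)].

Definition sig_prob (q : state -> R) (phi : state -> 'I_n -> R) (i : 'I_n) :=
  \sum_(th : state) q th * phi th i.

Definition cond_exp (q : state -> R) (rho : T -> R) (phi : state -> 'I_n -> R)
    (i j : 'I_n) :=
  (\sum_(th : state) q th * phi th i * rho (th j)) / sig_prob q phi i.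

Definition persuasive (q : state -> R) (rho : T -> R) (k : nat)
    (phi : state -> 'I_n -> R) :=
  forall i : 'I_n, (i < k)%N -> 0 < sig_prob q phi i ->
    forall j : 'I_n, cond_exp q rho phi i j <= cond_exp q rho phi i i.

Definition uR (q : state -> R) (rho : T -> R) (phi : state -> 'I_n -> R) :=
  \sum_(th : state) q th * \sum_(i < n) phi th i * rho (th i).

Definition exp_val (q : state -> R) (rho : T -> R) (i : 'I_n) :=
  \sum_(th : state) q th * rho (th i).

(* rho_E = max_i E[rho(theta_i)] (set to 0 if there are no actions) *)
Definition rhoE (q : state -> R) (rho : T -> R) : R :=
  match [pick i : 'I_n] with
  | Some i0 => \big[Num.max/exp_val q rho i0]_(i < n) exp_val q rho i
  | None => 0
  end.

End Persuasion.

(* Main.v *)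
Require Import Defs.
From HB Require Import structures.
From mathcomp Require Import all_boot all_order all_algebra all_fingroup.
From mathcomp Require Import zify ring lra.
Import Order.TTheory GRing.Theory Num.Theory.
Local Open Scope ring_scope.

Definition Bg {R : realFieldType} {T : finType} {n : nat}
  (q : state T n -> R) (phi : state T n -> 'I_n -> R) (h : T -> R) (i j : 'I_n) :=
  \sum_(th : state T n) q th * phi th i * h (th j).

Lemma permute_inj {T : finType} {n : nat} (pi : {perm 'I_n}) :
  injective (@permute T n pi).
Proof.
move=> a b H; apply/ffunP => m.
have := congr1 (fun f : state T n => f (pi m)) H.
by rewrite /permute !ffunE permK.
Qed.

Lemma permute_app (T : finType) (n : nat) (pi : {perm 'I_n}) (th : state T n) j :
  permute pi th (pi j) = th j.
Proof. by rewrite /permute ffunE permK. Qed.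

Lemma tperm_K (n k : nat) (x y : 'I_n) : (x < k)%N -> (y < k)%N ->
  tperm x y @: [set a : 'I_n | (a < k)%N] = [set a : 'I_n | (a < k)%N].
Proof.
move=> hx hy; apply/setP => z; rewrite inE; apply/imsetP/idP.
  by case=> a; rewrite inE => Ha ->; case: tpermP.
move=> Hz; exists (tperm x y z); last by rewrite tpermK.
by rewrite inE; case: tpermP.
Qed.

Lemma count_sum {R : realFieldType} {n k : nat} (c : R) : (k <= n)%N ->
  \sum_(i < n) (if (i < k)%N then c else 0) = c *+ k.
Proof.
move=> hkn; rewrite -big_mkcond /=.
rewrite -(big_ord_widen _ (fun _ => c) hkn) /=.
by rewrite sumr_const card_ord.
Qed.

Lemma L1 {R : realFieldType} {k : nat} {A D : R} : (2%:R : R) <= k%:R -> D <= A ->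
  D *+ k + (A - D) <= A *+ k.
Proof.
move=> h1 h2; rewrite -[D *+ k]mulr_natr -[A *+ k]mulr_natr.
move: h1 h2; set kk := (k%:R : R) => h1 h2; nra.
Qed.
Lemma L2 {R : realFieldType} {k : nat} {A D : R} : (2%:R : R) <= k%:R ->
  D *+ k + (A - D) <= A *+ k -> D <= A.
Proof.
move=> h1; rewrite -[D *+ k]mulr_natr -[A *+ k]mulr_natr.
move: h1; set kk := (k%:R : R) => h1 h2; nra.
Qed.
Lemma L3 {R : realFieldType} {k : nat} {A D : R} : (2%:R : R) <= k%:R ->
  D *+ k <= A *+ k -> D <= A.
Proof.
move=> h1; rewrite -[D *+ k]mulr_natr -[A *+ k]mulr_natr ler_pM2r //.
by apply: lt_le_trans h1; exact: ltr0Sn.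
Qed.

Theorem lemma3p3 (R : realFieldType) (T : finType) (n k : nat)
    (q : state T n -> R) (rho : T -> R) (phi : state T n -> 'I_n -> R) :
  (2 <= k)%N -> (k <= n)%N ->
  is_distr q -> symmetric_instance q ->
  symmetric_scheme k phi ->
  (persuasive q rho k phi <-> rhoE q rho <= uR q rho phi).
Proof.
move=> hk hkn [q0 q1] qs [hpos hsum hzero hsym].
have n0 : (0 < n)%N by lia.
have n1 : (1 < n)%N by lia.
pose i0 : 'I_n := Ordinal n0.
pose i1 : 'I_n := Ordinal n1.
have i0k : (i0 < k)%N by rewrite /= ; lia.
have i1k : (i1 < k)%N by rewrite /= ; lia.
have i01 : i0 != i1 by [].
have Bsym : forall h (x y i j : 'I_n), (x < k)%N -> (y < k)%N -> (i < k)%N ->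
    Bg q phi h (tperm x y i) (tperm x y j) = Bg q phi h i j.
  move=> h x y i j hx hy hi; rewrite /Bg (reindex_inj (permute_inj (tperm x y))) /=.
  apply: eq_bigr => th _.
  by rewrite qs hsym ?tperm_K // permute_app.
have BA : forall i : 'I_n, (i < k)%N -> Bg q phi rho i i = Bg q phi rho i0 i0.
  move=> i hi; have := Bsym rho i0 i i0 i0 i0k hi i0k; rewrite tpermL => ->//.
have Bcol : forall i i' j : 'I_n, (i < k)%N -> (i' < k)%N -> j != i -> j != i' ->
    Bg q phi rho i' j = Bg q phi rho i j.
  move=> i i' j hi hi' ji ji'.
  have := Bsym rho i i' i j hi hi' hi; rewrite tpermL tpermD //.
  - by rewrite eq_sym.
  - by rewrite eq_sym.
have P : forall i : 'I_n, (i < k)%N -> sig_prob q phi i = sig_prob q phi i0.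
  move=> i hi.
  have E1 : forall j, sig_prob q phi j = Bg q phi (fun _ => 1) j j.
    by move=> j; rewrite /sig_prob /Bg; apply: eq_bigr => th _; rewrite mulr1.
  rewrite !E1; have := Bsym (fun _ => 1) i0 i i0 i0 i0k hi i0k; rewrite tpermL => ->//.
have Bzero : forall h (i j : 'I_n), (k <= i)%N -> Bg q phi h i j = 0.
  move=> h i j hi; rewrite /Bg big1 // => th _; by rewrite hzero // mulr0 mul0r.
pose E := exp_val q rho i0.
have EV : forall j, exp_val q rho j = E.
  move=> j; rewrite /E /exp_val.
  have := tpermL i0 j.
  move=> /(congr1 (fun a => \sum_(th : state T n) q th * rho (th a))) /= <-.
  rewrite (reindex_inj (permute_inj (tperm i0 j))) /=.
  apply: eq_bigr => th _; by rewrite qs permute_app.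
have EVsum : forall j, exp_val q rho j = \sum_(i < n) Bg q phi rho i j.
  move=> j; rewrite /exp_val /Bg.
  transitivity (\sum_(th : state T n) \sum_(i < n) q th * phi th i * rho (th j)).
    apply: eq_bigr => th _; by rewrite -big_distrl -big_distrr /= hsum mulr1.
  exact: exchange_big.
have uRsum : uR q rho phi = \sum_(i < n) Bg q phi rho i i.
  rewrite /uR /Bg.
  transitivity (\sum_(th : state T n) \sum_(i < n) q th * phi th i * rho (th i)).
    apply: eq_bigr => th _; rewrite big_distrr /=; apply: eq_bigr => i _.
    by rewrite mulrA.
  exact: exchange_big.
have sumP : \sum_(i < n) sig_prob q phi i = 1.
  rewrite /sig_prob exchange_big /= -q1; apply: eq_bigr => th _.
  by rewrite -big_distrr /= hsum mulr1.
pose A := Bg q phi rho i0 i0.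
have uRA : uR q rho phi = A *+ k.
  rewrite uRsum -(count_sum A hkn); apply: eq_bigr => i _.
  case: ifP => hi; [exact: BA | by rewrite Bzero // leqNgt hi].
have Form1 : forall i j : 'I_n, (i < k)%N -> (j < k)%N -> i != j ->
    E = Bg q phi rho i j *+ k + (A - Bg q phi rho i j).
  move=> i j hi hj ij; rewrite -(EV j) EVsum.
  rewrite -(count_sum (Bg q phi rho i j) hkn).
  have -> : A - Bg q phi rho i j =
     \sum_(i' < n) (if i' == j then A - Bg q phi rho i j else 0).
    by rewrite -big_mkcond big_pred1_eq.
  rewrite -big_split /=; apply: eq_bigr => i' _.
  case: eqP => [->|/eqP ne].
    by rewrite hj addrC subrK BA.
  case: ifP => hi'; last by rewrite addr0 Bzero // leqNgt hi'.
  rewrite addr0 (Bcol i i' j) //; first by rewrite eq_sym.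
  by rewrite eq_sym.
have Form2 : forall i j : 'I_n, (i < k)%N -> (k <= j)%N ->
    E = Bg q phi rho i j *+ k.
  move=> i j hi hj; rewrite -(EV j) EVsum.
  rewrite -(count_sum (Bg q phi rho i j) hkn); apply: eq_bigr => i' _.
  case: ifP => hi'; last by rewrite Bzero // leqNgt hi'.
  apply: Bcol => //; apply/eqP => h; move: hj; rewrite h; lia.
have P0 : 0 < sig_prob q phi i0.
  have : sig_prob q phi i0 *+ k = 1.
    rewrite -sumP -(count_sum _ hkn); apply: eq_bigr => i _.
    case: ifP => hi; first by rewrite P.
    by rewrite /sig_prob big1 // => th _; rewrite hzero ?mulr0 // leqNgt hi.
  have : 0 <= sig_prob q phi i0.
    by rewrite /sig_prob sumr_ge0 // => th _; rewrite mulr_ge0.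
  rewrite le0r => /orP [/eqP ->|//]; by rewrite mul0rn => /eqP; rewrite eq_sym oner_eq0.
have rE : rhoE q rho = E.
  rewrite /rhoE; case: pickP => [j0 _|H]; last by have := H i0.
  apply: (big_ind (fun x => x = E)); first exact: EV.
    by move=> x y -> ->; rewrite maxxx.
  by move=> i _; exact: EV.
have ck : (2%:R : R) <= k%:R by rewrite ler_nat.
rewrite rE uRA.
split.
- move=> hp.
  have := hp i0 i0k P0 i1; rewrite /cond_exp -/(Bg q phi rho i0 i1) -/(Bg q phi rho i0 i0).
  rewrite ler_pM2r ?invr_gt0 // -/A => hle.
  rewrite (Form1 i0 i1) // ; exact: (L1 ck hle).
- move=> hle i hi Pi j.
  rewrite /cond_exp -/(Bg q phi rho i j) -/(Bg q phi rho i i) ler_pM2r ?invr_gt0 //.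
  rewrite BA // -/A.
  case: (eqVneq i j) => [<-|ij]; first by rewrite BA.
  case: (ltnP j k) => hj.
    move: hle; rewrite (Form1 i j) // ; exact: (L2 ck).
  move: hle; rewrite (Form2 i j) // ; exact: (L3 ck).
Qed.
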